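(* For every positive integer $n$, $|\mathrm{Sort}_n(\mathrm{SC}_{3\underline{21}})|=2^{n-1}$.
   Context: $\mathfrak S_n$ is the set of permutations of $\{1,\dots,n\}$. A vincular pattern is a permutation with some entries underlined; a sequence contains it if it has a subsequence with the same relative order in which entries corresponding to adjacent underlined entries occupy consecutive positions. An occurrence of $3\underline{21}$ is $a_i a_j a_{j+1}$ with $i<j$ and $a_{j+1}<a_j<a_i$. For a pattern $\sigma$, the map $\mathrm{SC}_\sigma$ acts on $\tau$: read entries left to right; when the next entry $x$ is read, if pushing $x$ yields a stack whose entries read top to bottom (stack adjacency = consecutive positions) avoid $\sigma$, push $x$; otherwise pop the top stack entry to the output and repeat. At the end pop all remaining entries; the output is $\mathrm{SC}_\sigma(\tau)$. West's stack-sorting map is $s=\mathrm{SC}_{21}$. $\mathrm{Sort}_n(\mathrm{SC}_\sigma)=\{\tau\in\mathfrak S_n : s(\mathrm{SC}_\sigma(\tau))=12\cdots n\}$. *)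

(* Defs.v *)
From mathcomp Require Import all_boot all_fingroup.
Set Implicit Arguments. Unset Strict Implicit. Unset Printing Implicit Defensive.

(* A vincular pattern: [p] is the permutation (a word over 1..k) and
   [adj] has length k-1, with [nth false adj j = true] iff the entries at
   positions j and j+1 of the pattern are both underlined (i.e. their
   occurrences must be at consecutive positions). *)
Record vpattern := VPat { vp_perm : seq nat; vp_adj : seq bool }.

Fixpoint subseqs (s : seq nat) : seq (seq nat) :=
  match s with
  | [::] => [:: [::]]
  | x :: t => let r := subseqs t in [seq x :: u | u <- r] ++ r
  end.

(* [idx] (strictly increasing positions in [w]) is an occurrence of [sg] in [w]. *)
Definition is_occurrence (sg : vpattern) (w idx : seq nat) : bool :=
  let p := vp_perm sg in
  [&& size idx == size p,
      all (fun a => all (fun b =>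
             (nth 0 p a < nth 0 p b) ==
             (nth 0 w (nth 0 idx a) < nth 0 w (nth 0 idx b)))
           (iota 0 (size p))) (iota 0 (size p)) &
      all (fun j => nth false (vp_adj sg) j ==>
             (nth 0 idx j.+1 == (nth 0 idx j).+1))
          (iota 0 (size p).-1)].

Definition contains (sg : vpattern) (w : seq nat) : bool :=
  has (is_occurrence sg w) (subseqs (iota 0 (size w))).

Definition avoids (sg : vpattern) (w : seq nat) : bool := ~~ contains sg w.

(* Stacks are lists read top to bottom (head = top of the stack). *)
Fixpoint sc_read (sg : vpattern) (x : nat) (st out : seq nat) : seq nat * seq nat :=
  if avoids sg (x :: st) then (x :: st, out) else
  match st with
  | [::] => ([:: x], out) (* unreachable for patterns of length >= 2 *)
  | y :: st' => sc_read sg x st' (rcons out y)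
  end.

Fixpoint sc_aux (sg : vpattern) (inp st out : seq nat) : seq nat :=
  match inp with
  | [::] => out ++ st
  | x :: t => let: (st', out') := sc_read sg x st out in sc_aux sg t st' out'
  end.

Definition SC (sg : vpattern) (tau : seq nat) : seq nat := sc_aux sg tau [::] [::].

Definition pat21 : vpattern := VPat [:: 2; 1] [:: false].
Definition pat3_21 : vpattern := VPat [:: 3; 2; 1] [:: false; true].

Definition west_s (w : seq nat) : seq nat := SC pat21 w.

Definition word n (g : 'S_n) : seq nat := [seq (nat_of_ord (g i)).+1 | i <- enum 'I_n].

Definition Sort_set n (sg : vpattern) : {set 'S_n} :=
  [set g : 'S_n | west_s (SC sg (word g)) == iota 1 n].

(* Main.v *)
Require Import Defs.
From mathcomp Require Import all_boot all_fingroup zify.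
Set Implicit Arguments. Unset Strict Implicit. Unset Printing Implicit Defensive.

Lemma mem_subseqs s u : (u \in subseqs s) = subseq u s.
Proof.
elim: s u => [|x t IH] u /=; first by case: u.
rewrite mem_cat IH; case: u => [|y u] /=; first by rewrite sub0seq orbT.
case: eqP => [->|ne].
  apply/idP/idP; last by move=> h; apply/orP; left; apply/mapP; exists u; rewrite ?IH.
  case/orP; first by case/mapP => v; rewrite IH => h [->].
  exact: cons_subseq.
apply/idP/idP; last by move=> ->; rewrite orbT.
case/orP => //; by case/mapP => v _ [].
Qed.

Lemma subseq_iota0 u m : sorted ltn u -> all (gtn m) u -> subseq u (iota 0 m).
Proof.
move=> su am; apply/subseq_uniqP; first exact: iota_uniq.
apply: (irr_sorted_eq ltn_trans ltnn) => //.
  exact/sorted_filter/iota_ltn_sorted/ltn_trans.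
move=> x; rewrite mem_filter mem_iota /= add0n.
case xu: (x \in u) => //=; by have /allP /(_ x xu) := am.
Qed.

Lemma subseq_iota0P u m : subseq u (iota 0 m) -> sorted ltn u /\ all (gtn m) u.
Proof.
move=> h; split; first exact: (subseq_sorted ltn_trans h (iota_ltn_sorted 0 m)).
apply/allP => x /(mem_subseq h); by rewrite mem_iota add0n.
Qed.

Lemma contains_hasP sg w : reflect (exists2 idx, subseq idx (iota 0 (size w)) & is_occurrence sg w idx) (contains sg w).
Proof.
apply: (iffP hasP) => [[idx]|[idx]]; rewrite ?mem_subseqs => h1 h2; by exists idx; rewrite ?mem_subseqs.
Qed.

Lemma contains21P w : reflect (exists i j, [/\ i < j, j < size w & nth 0 w j < nth 0 w i]) (contains pat21 w).
Proof.
apply: (iffP (contains_hasP _ _)).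
  case=> idx hs; case/subseq_iota0P: hs => so al.
  case: idx so al => [|i [|j [|k idx]]] //= so al; rewrite /is_occurrence /=.
  move=> /andP[/and3P[/and3P[_ _ _] /and3P[/eqP h _ _] _] _].
  exists i, j; rewrite !andbT in so al; case/andP: al => _ ->; split => //.
case=> i [j [ij jw lt]]; exists [:: i; j].
  apply: subseq_iota0; rewrite /= ?ij ?jw ?andbT //. exact: ltn_trans ij jw.
rewrite /is_occurrence /= !ltnn lt /=.
have -> : (nth 0 w i < nth 0 w j) = false by apply/negbTE; rewrite -leqNgt ltnW.
done.
Qed.

Lemma contains321P w : reflect (exists i j, [/\ i < j, j.+1 < size w, nth 0 w j.+1 < nth 0 w j & nth 0 w j < nth 0 w i]) (contains pat3_21 w).
Proof.
apply: (iffP (contains_hasP _ _)).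
  case=> idx hs; case/subseq_iota0P: hs => so al.
  case: idx so al => [|i [|j [|k [|l idx]]]] //= so al; rewrite /is_occurrence /=.
  move=> /and3P[/and4P[_ /and4P[/eqP h1 _ _ _] /and4P[_ /eqP h2 _ _] _] /eqP kE _].
  subst k; exists i, j; rewrite !andbT in so al; case/and3P: al => _ _ ->.
  by case/andP: so => ->; rewrite -h1 -h2.
case=> i [j [ij jw lt1 lt2]]; exists [:: i; j; j.+1].
  have jlt : j < size w by exact: ltn_trans (ltnSn j) jw.
  by apply: subseq_iota0 => /=; rewrite ?ij ?ltnSn ?jlt ?jw ?(ltn_trans ij jlt).
rewrite /is_occurrence /= !ltnn lt1 lt2 (ltn_trans lt1 lt2) /=.
by rewrite (leq_gtF (ltnW lt2)) (leq_gtF (ltnW lt1)) (leq_gtF (ltnW (ltn_trans lt1 lt2))) eqxx.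
Qed.

Lemma avoids21E w : avoids pat21 w = sorted leq w.
Proof.
rewrite /avoids (sorted_pairwise leq_trans); apply/idP/idP.
  move=> h; apply/(pairwiseP 0) => i j; rewrite !inE => iw jw ij.
  rewrite leqNgt; apply/negP => lt; move/negP: h; apply; apply/contains21P.
  by exists i, j.
move=> /(pairwiseP 0) h; apply/negP => /contains21P [i [j [ij jw lt]]].
have := h i j; rewrite !inE => /(_ (ltn_trans ij jw) jw ij); by rewrite leqNgt lt.
Qed.

Fixpoint bad (mx : nat) (t : seq nat) : bool :=
  if t is a :: t' then
    (if t' is b :: _ then (b < a) && (a < mx) else false) || bad (maxn mx a) t'
  else false.

Definition c321 (w : seq nat) : bool := if w is x :: t then bad x t else false.

Lemma badP mx t : bad mx t <-> exists j, [/\ j.+1 < size t, nth 0 t j.+1 < nth 0 t j &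
   (nth 0 t j < mx \/ exists i, i < j /\ nth 0 t j < nth 0 t i)].
Proof.
elim: t mx => [|a t IH] mx /=; first by split => // [[j []]].
split.
  case/orP.
    case: t {IH} => // b t /andP[ba amx]; exists 0; split => //; by left.
  case/IH => j [js lt1 [lt2|[i [ij lt2]]]].
    exists j.+1; split => //; move: lt2; rewrite leq_max => /orP[h|h]; [by left|].
    by right; exists 0.
  by exists j.+1; split => //; right; exists i.+1.
case=> [[|j]] [js lt1 h].
  case: t js lt1 h {IH} => // b t _ /= -> h; case: h => [->//|[i []]]; by [].
apply/orP; right; apply/IH; exists j; split => //.
case: h => [h|[[|i] [ij h]]].
- by left; rewrite leq_max h.
- by left; rewrite leq_max h orbT.
- by right; exists i.
Qed.

Lemma c321P w : c321 w <-> exists i j, [/\ i < j, j.+1 < size w, nth 0 w j.+1 < nth 0 w j & nth 0 w j < nth 0 w i].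
Proof.
case: w => [|x t] /=; first by split => // [[i [j [ij]]]]; rewrite ltn0.
split; [move/badP|move=> h; apply/badP; move: h].
  case=> j [js lt1 [lt2|[i [ij lt2]]]]; first by exists 0, j.+1.
  by exists i.+1, j.+1.
case=> i [[|j] [ij js lt1 lt2]] //.
exists j; split => //; case: i ij lt2 => [|i] ij lt2; first by left.
by right; exists i.
Qed.

Lemma avoids321E w : avoids pat3_21 w = ~~ c321 w.
Proof.
rewrite /avoids; congr negb; apply/idP/idP.
  by move/contains321P => h; apply/c321P.
by move/c321P => h; apply/contains321P.
Qed.

Fixpoint run sg (inp st out : seq nat) : seq nat * seq nat :=
  if inp is x :: t then run sg t (sc_read sg x st out).1 (sc_read sg x st out).2
  else (st, out).

Lemma sc_aux_run sg inp st out :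
  sc_aux sg inp st out = (run sg inp st out).2 ++ (run sg inp st out).1.
Proof.
elim: inp st out => [|x t IH] st out //=.
by case: (sc_read sg x st out) => a b; rewrite IH.
Qed.

Lemma sc_aux_cat sg a b st out :
  sc_aux sg (a ++ b) st out = sc_aux sg b (run sg a st out).1 (run sg a st out).2.
Proof.
elim: a st out => [|x t IH] st out //=.
by case: (sc_read sg x st out) => c d; rewrite IH.
Qed.

Lemma sc_read_out sg x st out :
  sc_read sg x st out = ((sc_read sg x st [::]).1, out ++ (sc_read sg x st [::]).2).
Proof.
elim: st out => [|y st IH] out /=.
  by case: ifP; rewrite cats0.
case: ifP => _; first by rewrite cats0.
rewrite IH [in RHS]IH /=; by rewrite cat_rcons.
Qed.

Lemma run_out sg inp st out :
  run sg inp st out = ((run sg inp st [::]).1, out ++ (run sg inp st [::]).2).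
Proof.
elim: inp st out => [|x t IH] st out /=; first by rewrite cats0.
rewrite sc_read_out /= IH [in RHS]IH /=; by rewrite catA.
Qed.

Lemma sc_aux_out sg inp st out : sc_aux sg inp st out = out ++ sc_aux sg inp st [::].
Proof. by rewrite !sc_aux_run run_out /= -catA. Qed.

Lemma sc_read_head sg x st out : exists Q, (sc_read sg x st out).1 = x :: Q.
Proof.
elim: st out => [|y st IH] out /=; first by case: ifP => _; eexists.
case: ifP => _; [by eexists | exact: IH].
Qed.

Lemma sc_read_perm sg x st out :
  perm_eq ((sc_read sg x st out).2 ++ (sc_read sg x st out).1) (out ++ x :: st).
Proof.
elim: st out => [|y st IH] out /=; first by case: ifP.
case: ifP => _ //; apply: perm_trans (IH _) _.
by rewrite -cats1 -catA /= perm_cat2l; apply/seq.permP => p; rewrite /= addnCA.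
Qed.

Lemma run_perm sg inp st out :
  perm_eq ((run sg inp st out).2 ++ (run sg inp st out).1) (out ++ st ++ inp).
Proof.
elim: inp st out => [|x t IH] st out /=; first by rewrite cats0.
apply: perm_trans (IH _ _) _; rewrite catA.
apply: perm_trans (perm_cat (sc_read_perm sg x st out) (perm_refl t)) _.
by rewrite -!catA perm_cat2l /=; apply/seq.permP => p; rewrite /= !count_cat /= addnCA.
Qed.

Lemma sc_aux_perm sg inp st out : perm_eq (sc_aux sg inp st out) (out ++ st ++ inp).
Proof. by rewrite sc_aux_run; apply: run_perm. Qed.

Lemma sc_read_nopop sg x st out :
  (sc_read sg x st out).2 = out -> (sc_read sg x st out).1 = x :: st.
Proof.
case: st => [|y st] /=; first by case: ifP.
case: ifP => // _; rewrite sc_read_out /= => /(congr1 size).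
by rewrite size_cat size_rcons addSn -addnS -[X in _ = X]addn0 => /eqP; rewrite eqn_add2l.
Qed.

Lemma run_nopop sg inp st out :
  (run sg inp st out).2 = out -> (run sg inp st out).1 = rev inp ++ st.
Proof.
elim: inp st out => [|x t IH] st out //=.
rewrite run_out [sc_read _ _ _ _]sc_read_out /= -catA => h.
have h0 : (sc_read sg x st [::]).2 ++ (run sg t (sc_read sg x st [::]).1 [::]).2 = [::].
  by apply/eqP; rewrite -size_eq0; move/(congr1 size): h; rewrite size_cat => /eqP; rewrite -{2}(addn0 (size out)) eqn_add2l.
have [h1 h2] : (sc_read sg x st [::]).2 = [::] /\ (run sg t (sc_read sg x st [::]).1 [::]).2 = [::].
  by case: (sc_read sg x st [::]).2 h0.
have e1 := sc_read_nopop h1.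
have := IH _ _ h2; rewrite e1 => ->; by rewrite rev_cons cat_rcons.
Qed.

Lemma sc_read_ext sg B M x T out :
  (forall T', all (gtn M) T' -> avoids sg (x :: T' ++ B) = avoids sg (x :: T')) ->
  avoids sg [:: x] -> all (gtn M) T ->
  sc_read sg x (T ++ B) out = ((sc_read sg x T out).1 ++ B, (sc_read sg x T out).2).
Proof.
move=> H ax; elim: T out => [|y T IH] out aT.
  have := H [::] isT; rewrite /= ax => e.
  by case: B H e => [|b B] H /= e; rewrite ?ax ?e.
have := H (y :: T) aT; rewrite /= => ->.
case: ifP => // _; rewrite IH //; by case/andP: aT.
Qed.

Lemma sc_read_sub sg x st out : {subset (sc_read sg x st out).1 <= x :: st}.
Proof.
elim: st out => [|y st IH] out z /=; first by case: ifP.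
case: ifP => _ // /IH; rewrite !inE => /orP[->//|->]; by rewrite !orbT.
Qed.

Lemma sc_aux_ext sg B M inp T out :
  (forall x T', x < M -> all (gtn M) T' -> avoids sg (x :: T' ++ B) = avoids sg (x :: T')) ->
  (forall x, avoids sg [:: x]) -> all (gtn M) inp -> all (gtn M) T ->
  sc_aux sg inp (T ++ B) out = sc_aux sg inp T out ++ B.
Proof.
move=> H ax; elim: inp T out => [|x t IH] T out /=; first by rewrite catA.
case/andP => xM ai aT.
rewrite (sc_read_ext (M := M)) //; last by move=> T' aT'; apply: H.
case E: (sc_read sg x T out) => [a b] /=; apply: IH => //.
apply/allP => z za; have := @sc_read_sub sg x T out z.
rewrite E /= => /(_ za); rewrite inE => /orP[/eqP->//|zT]; exact: (allP aT).
Qed.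

Lemma avoids21_1 x : avoids pat21 [:: x].
Proof. by rewrite avoids21E. Qed.

Lemma read21_popall M st out : all (gtn M) st -> sc_read pat21 M st out = ([:: M], out ++ st).
Proof.
elim: st out => [|y st IH] out /=; first by rewrite ?avoids21_1 cats0.
case/andP => yM ast; rewrite avoids21E /= leqNgt yM /=.
by rewrite IH // cat_rcons.
Qed.

Lemma west_max A M B : all (gtn M) A -> all (gtn M) B ->
  west_s (A ++ M :: B) = west_s A ++ west_s B ++ [:: M].
Proof.
move=> aA aB; rewrite /west_s /SC sc_aux_cat /=.
have ast : all (gtn M) (run pat21 A [::] [::]).1.
  apply/allP => z zs; apply: (allP aA); rewrite -(perm_mem (run_perm pat21 A [::] [::])).
  by rewrite mem_cat zs orbT.
rewrite read21_popall //= -[[:: M]]cat0s (sc_aux_ext (M := M)) //.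
- by rewrite sc_aux_out !sc_aux_run -!catA.
- move=> x T' xM aT'; rewrite !avoids21E /= !(cat_path) /= andbT.
  have : last x T' \in x :: T' by exact: mem_last.
  rewrite inE => /orP[/eqP->|/(allP aT') /=]; first by rewrite ltnW ?andbT.
  by move/ltnW => ->; rewrite andbT.
Qed.

Lemma west_inc q Q out : sorted ltn (q :: Q) -> sc_aux pat21 Q [:: q] out = out ++ q :: Q.
Proof.
elim: Q q out => [|x Q IH] q out /=; first by [].
case/andP => qx sQ.
rewrite avoids21E /= leqNgt qx /= ?avoids21_1 IH //.
by rewrite cat_rcons.
Qed.

Lemma west_sorted Q : sorted ltn Q -> west_s Q = Q.
Proof.
case: Q => [|q Q] //= h; rewrite /west_s /SC /= ?avoids21_1 west_inc //.
Qed.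

Lemma west_perm w : perm_eq (west_s w) w.
Proof. by rewrite /west_s /SC; apply: perm_trans (sc_aux_perm _ _ _ _) _. Qed.

Lemma SC_perm sg w : perm_eq (SC sg w) w.
Proof. by rewrite /SC; apply: perm_trans (sc_aux_perm _ _ _ _) _. Qed.

Lemma badE mx a t : bad mx (a :: t) =
  (if t is b :: _ then (b < a) && (a < mx) else false) || bad (maxn mx a) t.
Proof. by []. Qed.

Lemma bad_sorted mx t : sorted leq t -> bad mx t = false.
Proof.
elim: t mx => [|a t IH] mx //= st.
rewrite IH ?(path_sorted st) // orbF.
case: t st {IH} => // b t /andP[ab _]; by rewrite ltnNge ab.
Qed.

Lemma bad_false_sorted mx t : all (gtn mx) t -> ~~ bad mx t -> sorted leq t.
Proof.
elim: t => [|a t IH] //= /andP[amx ai]; rewrite negb_or => /andP[h1 h2].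
have e : maxn mx a = mx by apply/maxn_idPl/ltnW.
rewrite e in h2; have st := IH ai h2.
case: t st h1 {IH ai h2} => // b t st; rewrite amx andbT -leqNgt => ab /=.
by rewrite ab.
Qed.

Lemma bad_ext mx M T Q : mx < M -> all (gtn M) T -> sorted leq Q ->
  bad mx (T ++ M :: Q) = bad mx T.
Proof.
elim: T mx => [|a T IH] mx mxM /=.
  move=> _ sQ; rewrite bad_sorted // orbF; case: Q sQ => // b Q _.
  by rewrite [M < mx]ltnNge (ltnW mxM) andbF.
case/andP => aM aT sQ; rewrite IH //; last by rewrite gtn_max mxM.
by case: T aT {IH} => //= _; rewrite [M < a]ltnNge (ltnW aM).
Qed.

Lemma avoids321_1 x : avoids pat3_21 [:: x].
Proof. by rewrite avoids321E. Qed.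

Lemma bad_mono mx mx' t : mx <= mx' -> bad mx t -> bad mx' t.
Proof.
elim: t mx mx' => [|a t IH] mx mx' //= le.
case/orP => [h|h]; apply/orP.
  left; case: t h {IH} => // b t /andP[-> amx] /=; exact: leq_trans amx le.
right; apply: IH h; rewrite geq_max leq_maxr andbT leq_max; by rewrite le.
Qed.

Lemma c321_behead y st : ~~ c321 (y :: st) -> ~~ c321 st.
Proof.
case: st => [|b t] //=; apply: contra => h; apply/orP; right.
apply: bad_mono h; exact: leq_maxr.
Qed.

Lemma lastpop x y st : ~~ c321 (y :: st) -> ~~ c321 (x :: st) -> c321 (x :: y :: st) ->
  exists b t, st = b :: t /\ b < y.
Proof.
case: st => [|b t]; first by move=> /= _ _.
rewrite /c321 => h1 h2; rewrite badE => /orP[/andP[lt _]|h]; first by exists b, t.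
case: (leqP x y) => e.
  by move: h; rewrite (maxn_idPr e) (negbTE h1).
by move: h; rewrite (maxn_idPl (ltnW e)) (negbTE h2).
Qed.

Lemma read321_avoid x st out : ~~ c321 (sc_read pat3_21 x st out).1.
Proof.
elim: st out => [|y st IH] out /=; first by try case: ifP.
by case: ifP => [h|_]; [rewrite -avoids321E | exact: IH].
Qed.

Definition Wit (st out : seq nat) := exists p q, [/\ p \in out, q \in st & q < p].

Lemma pops_witness x st out : ~~ c321 st -> c321 (x :: st) ->
  Wit (sc_read pat3_21 x st out).1 (sc_read pat3_21 x st out).2.
Proof.
elim: st out => [|y st IH] out; first by [].
move=> h1 h2 /=; rewrite avoids321E h2 /=.
have h3 := c321_behead h1.
case h4: (c321 (x :: st)); first exact: IH.
case: st h1 h2 h3 h4 {IH} => [|b t] h1 h2 h3 h4.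
  by rewrite /c321 /= in h2.
rewrite /= avoids321E h4 /=.
have [b' [t' [[eb et] lt]]] := lastpop h1 (negbT h4) h2.
subst b' t'; exists y, b; split => //; first by rewrite mem_rcons mem_head.
by rewrite !inE eqxx orbT.
Qed.

Definition Good (st out : seq nat) := ~~ c321 st /\ (out = [::] \/ Wit st out).

Lemma read_good x st out : Good st out ->
  Good (sc_read pat3_21 x st out).1 (sc_read pat3_21 x st out).2.
Proof.
case=> h1 h2; split; first exact: read321_avoid.
case h: (c321 (x :: st)); first by right; exact: pops_witness.
case: st h1 h2 h => [|y st] h1 h2 h /=.
  by case: h2 => [->|[p [q [_]]]]; [left|].
rewrite avoids321E h /=.
case: h2 => [->|[p [q [pi qi lt]]]]; [by left|right].
by exists p, q; split => //; rewrite inE qi orbT.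
Qed.

Lemma run_good inp st out : Good st out ->
  Good (run pat3_21 inp st out).1 (run pat3_21 inp st out).2.
Proof.
elim: inp st out => [|x t IH] st out //= g; apply: IH; exact: read_good.
Qed.

Lemma read_push x st out : ~~ c321 (x :: st) -> sc_read pat3_21 x st out = (x :: st, out).
Proof. by case: st => [|y st] //= h; rewrite avoids321E h. Qed.

Lemma run_sorted inp st out : sorted leq (rev inp ++ st) ->
  run pat3_21 inp st out = (rev inp ++ st, out).
Proof.
elim: inp st out => [|x t IH] st out //=.
rewrite rev_cons cat_rcons => h.
have sx : sorted leq (x :: st) by case: (cat_sorted2 h).
rewrite read_push ?IH // /c321 bad_sorted //; exact: path_sorted sx.
Qed.

Lemma sc_aux_cons sg x t st out :
  sc_aux sg (x :: t) st out = sc_aux sg t (sc_read sg x st out).1 (sc_read sg x st out).2.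
Proof. by rewrite /=; case: sc_read. Qed.

Lemma perm_cancel_mid (P Q P' Q' : seq nat) M :
  perm_eq (P ++ M :: Q) (P' ++ M :: Q') -> perm_eq (P ++ Q) (P' ++ Q').
Proof.
move=> h; apply/seq.permP => a; have := seq.permP h a.
by rewrite !count_cat /= addnCA [in RHS]addnCA => /addnI.
Qed.

Lemma SC_decomp L M R : all (gtn M) L -> all (gtn M) R ->
  exists P Q, [/\ SC pat3_21 (L ++ M :: R) = P ++ SC pat3_21 R ++ M :: Q,
   perm_eq (P ++ Q) L, sorted leq Q,
   (P = [::] -> Q = rev L) &
   ((sorted leq (rev L) -> P = [::]) /\
    (P = [::] \/ exists p q, [/\ p \in P, q \in Q & q < p]))].
Proof.
move=> aL aR.
set rL := run pat3_21 L [::] [::].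
set r := sc_read pat3_21 M rL.1 rL.2.
have [Q hQ] := sc_read_head pat3_21 M rL.1 rL.2.
rewrite -/r in hQ.
have permL : perm_eq (rL.2 ++ rL.1) L by apply: perm_trans (run_perm _ _ _ _) _.
have permr : perm_eq (r.2 ++ M :: Q) (rL.2 ++ M :: rL.1) by rewrite -hQ; exact: sc_read_perm.
have permPQ : perm_eq (r.2 ++ Q) L by apply: perm_trans (perm_cancel_mid permr) permL.
have subL z : z \in r.2 ++ Q -> z \in L by rewrite (perm_mem permPQ).
have aQ : all (gtn M) Q by apply/allP => z zQ; apply: (allP aL); apply: subL; rewrite mem_cat zQ orbT.
have gL : Good rL.1 rL.2 by apply: run_good; split => //; left.
have gr : Good r.1 r.2 by apply: read_good.
have sQ : sorted leq Q.
  case: gr => h _; rewrite hQ in h; exact: bad_false_sorted h.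
exists r.2, Q; split => //.
- rewrite /SC sc_aux_cat sc_aux_cons -/rL -/r hQ -[M :: Q]cat0s (sc_aux_ext (M := M)) //.
  + by rewrite sc_aux_out -catA.
  + move=> x T' xM aT'; rewrite !avoids321E /c321 bad_ext //.
- move=> P0.
  have e2 : rL.2 = [::].
    move: P0; rewrite /r sc_read_out /= => /(congr1 size); rewrite size_cat.
    by case: (rL.2).
  have e1 : r.1 = M :: rL.1 by apply: sc_read_nopop; rewrite -/r P0 e2.
  have := run_nopop e2; rewrite cats0 -/rL => <-.
  by rewrite hQ in e1; case: e1.
split.
  move=> sL.
  have e : rL = (rev L, [::]) by rewrite /rL run_sorted ?cats0.
  rewrite /r e /= read_push //= bad_sorted //.
case: gr => _ [->|[p [q [pi qi lt]]]]; [by left|right].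
  exists p, q; split => //.
  have pM : p < M by apply: (allP aL); apply: subL; rewrite mem_cat pi.
  by move: qi; rewrite hQ inE => /orP[/eqP qM|//]; move: lt; rewrite qM ltnNge ltnW.
Qed.

Lemma core L M R : uniq L -> all (gtn M) L -> all (gtn M) R ->
  sorted ltn (west_s (SC pat3_21 (L ++ M :: R))) =
  [&& sorted ltn (rev L), allrel ltn R L & sorted ltn (west_s (SC pat3_21 R))].
Proof.
move=> uL aL aR.
have [P [Q [eSC pPQ sQ PQ [sP wit]]]] := SC_decomp aL aR.
have subP z : z \in P -> z \in L by move=> zP; rewrite -(perm_mem pPQ) mem_cat zP.
have subQ z : z \in Q -> z \in L by move=> zQ; rewrite -(perm_mem pPQ) mem_cat zQ orbT.
have aA : all (gtn M) (P ++ SC pat3_21 R).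
  rewrite all_cat; apply/andP; split; apply/allP => z.
    by move/subP; apply: (allP aL).
  by rewrite (perm_mem (SC_perm _ _)); apply: (allP aR).
have aQ : all (gtn M) Q by apply/allP => z /subQ; apply: (allP aL).
rewrite eSC catA west_max // [LHS](sorted_pairwise ltn_trans) !pairwise_cat /= !andbT.
apply/idP/idP.
  case/and4P => /allrelP h1 pA _ pQ.
  have P0 : P = [::].
    case: wit => // [[p [q [pP qQ lt]]]].
    have := h1 p q; rewrite (perm_mem (west_perm _)) mem_cat pP mem_cat (perm_mem (west_perm _)) qQ.
    by move=> /(_ isT isT); rewrite ltnNge ltnW.
  have QL := PQ P0; subst P.
  rewrite QL in h1 pQ sQ; rewrite /= in h1 pA.
  apply/and3P; split.
  - by rewrite ltn_sorted_uniq_leq rev_uniq uL.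
  - apply/allrelP => a b aR' bL; have := h1 a b.
    rewrite (perm_mem (west_perm _)) (perm_mem (SC_perm _ _)) aR'.
    by rewrite mem_cat (perm_mem (west_perm _)) mem_rev bL => /(_ isT isT).
  - by rewrite (sorted_pairwise ltn_trans).
case/and3P => sL /allrelP hRL pW.
have P0 : P = [::] by apply: sP; apply: sub_sorted sL; exact: ltnW.
have QL := PQ P0; subst P; rewrite QL /= [west_s (rev L)]west_sorted //.
apply/and4P; split.
- apply/allrelP => a b; rewrite (perm_mem (west_perm _)) (perm_mem (SC_perm _ _)) => aR'.
  rewrite mem_cat inE => /orP[bL|/eqP->].
    by apply: hRL => //; rewrite -mem_rev.
  exact: (allP aR).
- by rewrite -(sorted_pairwise ltn_trans).
- apply/allrelP => a b; rewrite mem_rev => aL' /[!inE] /eqP->; exact: (allP aL).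
- by rewrite -(sorted_pairwise ltn_trans).
Qed.

Definition Lp (m j : nat) : seq nat := rev (iota j.+1 (m - j)).

Fixpoint Gf (f m : nat) : seq (seq nat) :=
  if f is f'.+1 then
    (if m is m'.+1 then [seq Lp m' j ++ m :: r | j <- iota 0 m, r <- Gf f' j] else [:: [::]])
  else [:: [::]].

Definition G m := Gf m m.

Lemma eq_allpairs_in (f : nat -> seq nat -> seq nat) (s : seq nat) (t1 t2 : nat -> seq (seq nat)) :
  {in s, forall x, t1 x = t2 x} ->
  [seq f x y | x <- s, y <- t1 x] = [seq f x y | x <- s, y <- t2 x].
Proof.
elim: s => [|a s IH] //= h; rewrite h ?mem_head // IH // => x xs; apply: h; by rewrite inE xs orbT.
Qed.

Lemma Gf_eq f1 f2 m : m <= f1 -> m <= f2 -> Gf f1 m = Gf f2 m.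
Proof.
elim: f1 f2 m => [|f1 IH] [|f2] [|m] // h1 h2.
apply: (@eq_allpairs_in (fun j r => Lp m j ++ m.+1 :: r)) => j; rewrite mem_iota add0n => /= jm.
by apply: IH; rewrite -ltnS; apply: leq_trans jm _.
Qed.

Lemma GS m : G m.+1 = [seq Lp m j ++ m.+1 :: r | j <- iota 0 m.+1, r <- G j].
Proof.
apply: (@eq_allpairs_in (fun j r => Lp m j ++ m.+1 :: r)) => j; rewrite mem_iota add0n => /= jm.
apply: Gf_eq => //.
Qed.

Lemma G0 : G 0 = [:: [::]]. Proof. by []. Qed.

Lemma G_ind (P : nat -> Prop) : P 0 -> (forall m, (forall j, j <= m -> P j) -> P m.+1) -> forall m, P m.
Proof.
move=> h0 hS m; suff : forall j, j <= m -> P j by apply.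
elim: m => [|m IH] j; first by rewrite leqn0 => /eqP->.
rewrite leq_eqVlt => /orP[/eqP->|]; [exact: hS|exact: IH].
Qed.

Lemma G_perm m w : w \in G m -> perm_eq w (iota 1 m).
Proof.
elim/G_ind: m w => [|m IH] w; first by rewrite G0 inE => /eqP->.
rewrite GS => /allpairsPdep [j [r [jm rG ->]]].
move: jm; rewrite mem_iota add0n => jm.
have pr := IH j jm r rG.
have ->: iota 1 m.+1 = iota 1 j ++ iota j.+1 (m - j) ++ [:: m.+1].
  have ->: iota 1 m.+1 = iota 1 (j + (m - j) + 1) by rewrite subnKC // addn1.
  by rewrite !iotaD -catA !add1n subnKC.
apply/seq.permP => a; rewrite /Lp !count_cat /= count_rev (seq.permP pr a).
by rewrite addn0 [RHS]addnC -addnA.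
Qed.

Lemma eq_iota_sorted s m : perm_eq s (iota 1 m) -> (s == iota 1 m) = sorted ltn s.
Proof.
move=> p; apply/eqP/idP => [->|ss]; first exact: iota_ltn_sorted.
apply: (irr_sorted_eq ltn_trans ltnn) => //; first exact: iota_ltn_sorted.
exact: perm_mem.
Qed.

Lemma split_unique (L1 R1 L2 R2 : seq nat) x : x \notin L1 -> x \notin L2 ->
  L1 ++ x :: R1 = L2 ++ x :: R2 -> L1 = L2 /\ R1 = R2.
Proof.
move=> h1 h2 e; have := congr1 (index x) e; rewrite !index_cat (negbTE h1) (negbTE h2) /= eqxx !addn0 => sz.
move/eqP: e; rewrite eqseq_cat // => /andP[/eqP-> /eqP[->]]; by [].
Qed.

Lemma main_char m w : perm_eq w (iota 1 m) ->
  (west_s (SC pat3_21 w) == iota 1 m) = (w \in G m).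
Proof.
elim/G_ind: m w => [|m IH] w.
  move=> p; have := perm_size p; rewrite size_iota => /size0nil ->; by [].
move=> p.
have Mw : m.+1 \in w by rewrite (perm_mem p) mem_iota /= add1n ltnSn.
have uw : uniq w by rewrite (perm_uniq p) iota_uniq.
case/splitPr: Mw p uw => L R p uw.
rewrite eq_iota_sorted; last by apply: perm_trans (west_perm _) _; apply: perm_trans (SC_perm _ _) p.
have memw x : x \in L ++ m.+1 :: R -> x <= m.+1.
  by rewrite (perm_mem p) mem_iota add1n ltnS => /andP[].
move: uw; rewrite cat_uniq /= => /and4P[uL hn ML uR].
rewrite negb_or in hn; case/andP: hn => MnL _.
have aL : all (gtn m.+1) L.
  apply/allP => x xL /=; rewrite ltn_neqAle memw ?mem_cat ?xL // andbT.
  by apply: contraNneq MnL => <-.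
have aR : all (gtn m.+1) R.
  apply/allP => x xR /=; rewrite ltn_neqAle memw ?mem_cat ?inE ?xR ?orbT // andbT.
  by apply: contraNneq ML => <-.
rewrite core //.
rewrite GS; apply/and3P/allpairsPdep.
  case=> sL /allrelP hRL sW.
  have pLR : perm_eq (L ++ R) (iota 1 m).
    have := perm_cancel_mid (P' := iota 1 m) (Q' := [::]) (M := m.+1).
    have e : iota 1 m.+1 = iota 1 m ++ [:: m.+1].
      by rewrite -[m.+1]addn1 iotaD /= add1n addn1.
    rewrite cats0; apply; by rewrite -e.
  set t := size R.
  have sortu (X : seq nat) : uniq X -> sorted ltn (sort leq X).
    by move=> uX; rewrite ltn_sorted_uniq_leq sort_uniq uX sort_sorted //; exact: leq_total.
  have sRL : sort leq R ++ sort leq L = iota 1 m.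
    apply: (irr_sorted_eq ltn_trans ltnn); last 1 first.
    - by move=> x; rewrite -(perm_mem pLR) !mem_cat !mem_sort orbC.
    - rewrite (sorted_pairwise ltn_trans) pairwise_cat; apply/and3P; split.
      + by apply/allrelP => x y; rewrite !mem_sort; exact: hRL.
      + by rewrite -(sorted_pairwise ltn_trans); apply: sortu.
      + by rewrite -(sorted_pairwise ltn_trans); apply: sortu.
    - exact: iota_ltn_sorted.
  have tm : t <= m by rewrite -(size_iota 1 m) -(perm_size pLR) size_cat leq_addl.
  have e : iota 1 m = iota 1 t ++ iota t.+1 (m - t) by rewrite -{1}(subnKC tm) iotaD add1n.
  move: sRL; rewrite e => /eqP; rewrite eqseq_cat ?size_sort ?size_iota // => /andP[/eqP eR /eqP eL].
  have Le : L = Lp m t.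
    have : rev L = sort leq L.
      apply: (irr_sorted_eq ltn_trans ltnn) => //; first exact: sortu.
      by move=> x; rewrite mem_rev mem_sort.
    by rewrite eL /Lp => <-; rewrite revK.
  have pR : perm_eq R (iota 1 t) by rewrite -eR perm_sym perm_sort.
  exists t, R; split => //.
  - by rewrite mem_iota add0n /= ltnS.
  - rewrite -(IH t tm R pR) eq_iota_sorted //.
    by apply: perm_trans (west_perm _) _; apply: perm_trans (SC_perm _ _) pR.
  - by rewrite Le.
case=> j [r [jm rG e]].
move: jm; rewrite mem_iota add0n /= ltnS => jm.
have MnLp : m.+1 \notin Lp m j.
  by rewrite /Lp mem_rev mem_iota addSn subnKC // ltnn andbF.
case: (split_unique MnL MnLp e) => eL eR; subst L R.
have pr := G_perm rG.
split.
- rewrite /Lp revK; exact: iota_ltn_sorted.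
- apply/allrelP => x y; rewrite (perm_mem pr) /Lp mem_rev !mem_iota => /andP[_ xj] /andP[jy _].
  exact: leq_trans xj jy.
- rewrite -(eq_iota_sorted (m := j)) ?(IH j jm r pr) //.
  by apply: perm_trans (west_perm _) _; apply: perm_trans (SC_perm _ _) pr.
Qed.

Lemma MnLp m j : m.+1 \notin Lp m j.
Proof.
rewrite /Lp mem_rev mem_iota; case: (leqP j m) => h.
  by rewrite addSn subnKC // ltnn andbF.
by rewrite ltnS leqNgt h.
Qed.

Lemma G_uniq m : uniq (G m).
Proof.
elim/G_ind: m => [|m IH] //.
rewrite GS; apply: allpairs_uniq_dep; first exact: iota_uniq.
  by move=> j; rewrite mem_iota add0n /= ltnS; apply: IH.
move=> [j r] [j' r'] h1 h2 /= e.
have jm : j <= m.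
  case/allpairsPdep: h1 => x [y [xs _ ex]]; have /= -> := congr1 tag ex.
  by move: xs; rewrite mem_iota add0n ltnS.
have jm' : j' <= m.
  case/allpairsPdep: h2 => x [y [xs _ ex]]; have /= -> := congr1 tag ex.
  by move: xs; rewrite mem_iota add0n ltnS.
case: (split_unique (MnLp m j) (MnLp m j') e) => eL eR.
have := congr1 size eL; rewrite /Lp !size_rev !size_iota => ej.
have ejj : j = j' by lia.
by subst j' r'.
Qed.

Lemma G_sum m : sumn [seq size (G j) | j <- iota 0 m.+1] = 2 ^ m.
Proof.
elim: m => [|m IH]; first by [].
rewrite -[m.+2]addn1 iotaD map_cat sumn_cat IH /= GS size_allpairs_dep IH.
by rewrite addn0 addnn -mul2n expnS.
Qed.

Lemma G_size m : size (G m.+1) = 2 ^ m.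
Proof. by rewrite GS size_allpairs_dep G_sum. Qed.

Lemma word_inj k : injective (@word k).
Proof.
move=> g h /eq_in_map e; apply/permP => i.
by apply: val_inj; have := e i (mem_enum _ i) => -[].
Qed.

Lemma word_perm k (g : 'S_k) : perm_eq (word g) (iota 1 k).
Proof.
apply: uniq_perm; last 1 first.
- move=> x; rewrite mem_iota add1n; apply/mapP/idP.
    by case=> i _ ->; rewrite [_ < k.+1]ltnS ltn_ord.
  case/andP => x0; rewrite ltnS => xk.
  have xk' : x.-1 < k by rewrite prednK.
  exists ((g^-1)%g (Ordinal xk')); first exact: mem_enum.
  by rewrite permKV /= prednK.
- rewrite map_inj_uniq ?enum_uniq // => i j [] /val_inj; exact: perm_inj.
- exact: iota_uniq.
Qed.

Lemma word_surj n (x : seq nat) : perm_eq x (iota 1 n.+1) -> exists g : 'S_n.+1, word g = x.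
Proof.
move=> p.
have sx : size x = n.+1 by rewrite (perm_size p) size_iota.
have ux : uniq x by rewrite (perm_uniq p) iota_uniq.
have rng (i : 'I_n.+1) : 0 < nth 0 x i <= n.+1.
  have : nth 0 x i \in iota 1 n.+1 by rewrite -(perm_mem p) mem_nth // sx.
  by rewrite mem_iota add1n ltnS.
pose f (i : 'I_n.+1) : 'I_n.+1 := inord (nth 0 x i).-1.
have fE i : nat_of_ord (f i) = (nth 0 x i).-1.
  rewrite /f inordK //; case/andP: (rng i) => h1 h2; by rewrite prednK.
have finj : injective f.
  move=> i j /(congr1 (@nat_of_ord _)); rewrite !fE => e.
  have e' : nth 0 x i = nth 0 x j.
    by case/andP: (rng i) => hi _; case/andP: (rng j) => hj _; rewrite -(prednK hi) -(prednK hj) e.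
  apply: val_inj; apply/eqP; rewrite -(nth_uniq 0 _ _ ux) ?sx ?ltn_ord //; exact/eqP.
exists (perm finj).
rewrite /word.
have -> : [seq (nat_of_ord (perm finj i)).+1 | i <- enum 'I_n.+1] = [seq nth 0 x (nat_of_ord i) | i <- enum 'I_n.+1].
  apply: eq_map => i; rewrite permE fE; by case/andP: (rng i) => h _; rewrite prednK.
by rewrite (map_comp (nth 0 x) (@nat_of_ord _)) val_enum_ord; have := mkseq_nth 0 x; rewrite /mkseq sx.
Qed.

Unset Implicit Arguments.
Theorem mainTheorem8 (n : nat) : 0 < n -> #|Sort_set n pat3_21| = 2 ^ n.-1.
Proof.
case: n => // n _ /=.
rewrite cardE -(size_map (@word n.+1)) -G_size; apply: perm_size.
apply: uniq_perm.
- rewrite map_inj_uniq ?enum_uniq //; exact: word_inj.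
- exact: G_uniq.
move=> x; apply/mapP/idP.
  case=> g; rewrite mem_enum inE => h ->.
  by rewrite -main_char ?word_perm.
move=> xG; have p := G_perm xG.
have [g gx] := word_surj p.
exists g => //; rewrite mem_enum inE gx main_char //.
Qed.
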